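(* Let $X,Y$ be real normed linear spaces, $m\ge1$, $n\ge 2$ integers, and $L:X^m\to Y$ a continuous symmetric $m$-linear mapping with $\widehat L\ne 0$. Then \[\left(\frac{\|L\|_{(n)}}{\|\widehat{L}\|}\right)^{1/m}\le \sqrt{n}.\] Moreover, for $n=2$ and $m$ odd, the inequality $\left(\|L\|_{(2)}/\|\widehat{L}\|\right)^{1/m}<\sqrt2$ is strict.
   Context: For real normed spaces $X,Y$, a continuous symmetric $m$-linear map $L:X^m\to Y$ has associated $m$-homogeneous polynomial $\widehat{L}(x)=L(x,\ldots,x)$, with $\|\widehat{L}\|=\sup\{\|\widehat{L}(x)\|:\|x\|\le 1\}$. The notation $L(x_1^{k_1}\cdots x_n^{k_n})$ means $L$ evaluated at the $m$-tuple in which each $x_i$ appears $k_i$ times ($k_1+\cdots+k_n=m$, $k_i\ge 0$ integers). Define \[\|L\|_{(n)}=\sup_{k_1+\cdots+k_n=m}\ \sup\{\|L(x_1^{k_1}\cdots x_n^{k_n})\|:\|x_1\|\le 1,\ldots,\|x_n\|\le 1\}.\] *)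

(* Defs.v *)
From Stdlib Require Import Reals Lra Lia List.
Import ListNotations.
Open Scope R_scope.

Record NormedSpace := mkNormedSpace {
  carrier :> Type;
  vzero : carrier;
  vadd : carrier -> carrier -> carrier;
  vopp : carrier -> carrier;
  vscal : R -> carrier -> carrier;
  vnorm : carrier -> R;
  vadd_assoc : forall x y z, vadd x (vadd y z) = vadd (vadd x y) z;
  vadd_comm : forall x y, vadd x y = vadd y x;
  vadd_0 : forall x, vadd x vzero = x;
  vadd_opp : forall x, vadd x (vopp x) = vzero;
  vscal_1 : forall x, vscal 1 x = x;
  vscal_assoc : forall a b x, vscal a (vscal b x) = vscal (a * b) x;
  vscal_distr_v : forall a x y, vscal a (vadd x y) = vadd (vscal a x) (vscal a y);
  vscal_distr_s : forall a b x, vscal (a + b) x = vadd (vscal a x) (vscal b x);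
  vnorm_eq0 : forall x, vnorm x = 0 -> x = vzero;
  vnorm_scal : forall a x, vnorm (vscal a x) = Rabs a * vnorm x;
  vnorm_triangle : forall x y, vnorm (vadd x y) <= vnorm x + vnorm y
}.

Arguments vzero {n}.
Arguments vadd {n}.
Arguments vopp {n}.
Arguments vscal {n}.
Arguments vnorm {n}.

Definition vsub {X : NormedSpace} (x y : X) : X := vadd x (vopp y).

(* An m-linear map X^m -> Y is represented as L : (nat -> X) -> Y,
   where only the arguments at indices 0..m-1 matter. *)
Definition upd {X : Type} (f : nat -> X) (j : nat) (x : X) : nat -> X :=
  fun i => if Nat.eqb i j then x else f i.

Definition depends_on_first (X Y : NormedSpace) (m : nat) (L : (nat -> X) -> Y) :=
  forall f g : nat -> X, (forall i, (i < m)%nat -> f i = g i) -> L f = L g.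

Definition multilinear (X Y : NormedSpace) (m : nat) (L : (nat -> X) -> Y) :=
  forall (f : nat -> X) (j : nat) (a : R) (x y : X), (j < m)%nat ->
    L (upd f j (vadd (vscal a x) y)) = vadd (vscal a (L (upd f j x))) (L (upd f j y)).

Definition symmetric_map (X Y : NormedSpace) (m : nat) (L : (nat -> X) -> Y) :=
  forall sigma : nat -> nat,
    (forall i, (i < m)%nat -> (sigma i < m)%nat) ->
    (forall i j, (i < m)%nat -> (j < m)%nat -> sigma i = sigma j -> i = j) ->
    forall f : nat -> X, L (fun i => f (sigma i)) = L f.

Definition continuous_map (X Y : NormedSpace) (m : nat) (L : (nat -> X) -> Y) :=
  forall (f : nat -> X) (eps : R), 0 < eps ->
    exists delta, 0 < delta /\
      forall g : nat -> X, (forall i, (i < m)%nat -> vnorm (vsub (g i) (f i)) < delta) ->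
        vnorm (vsub (L g) (L f)) < eps.

Definition is_csm (X Y : NormedSpace) (m : nat) (L : (nat -> X) -> Y) :=
  depends_on_first X Y m L /\ multilinear X Y m L /\
  symmetric_map X Y m L /\ continuous_map X Y m L.

Definition hat {X Y : NormedSpace} (L : (nat -> X) -> Y) (x : X) : Y :=
  L (fun _ => x).

Definition hat_norm_set {X Y : NormedSpace} (L : (nat -> X) -> Y) (r : R) : Prop :=
  exists x : X, vnorm x <= 1 /\ r = vnorm (hat L x).

(* the m-tuple (x_1^{k_1} ... x_n^{k_n}): k_1 copies of x_1, then k_2 copies of x_2, ... *)
Definition block_tuple {X : NormedSpace} (xs : list X) (ks : list nat) : nat -> X :=
  fun i => nth i (flat_map (fun p => repeat (fst p) (snd p)) (combine xs ks)) vzero.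

(* the set whose sup is ||L||_(n) *)
Definition n_norm_set {X Y : NormedSpace} (m n : nat) (L : (nat -> X) -> Y) (r : R) : Prop :=
  exists (ks : list nat) (xs : list X),
    length ks = n /\ length xs = n /\ list_sum ks = m /\
    Forall (fun x => vnorm x <= 1) xs /\
    r = vnorm (L (block_tuple xs ks)).

(* Main.v *)
Require Import Defs.
From Stdlib Require Import Reals Lra Lia List FunctionalExtensionality.
From mathcomp Require all_boot all_order all_algebra.
From mathcomp Require all_classical all_reals all_analysis.
From mathcomp Require Rstruct Rstruct_topology.
Import ListNotations.
Open Scope R_scope.

Arguments vadd_assoc {n}. Arguments vadd_comm {n}. Arguments vadd_0 {n}.
Arguments vadd_opp {n}. Arguments vscal_1 {n}. Arguments vscal_assoc {n}.
Arguments vscal_distr_v {n}. Arguments vscal_distr_s {n}. Arguments vnorm_eq0 {n}.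
Arguments vnorm_scal {n}. Arguments vnorm_triangle {n}.

Section VS.
Variable X : NormedSpace.
Implicit Types x y z : X.

Lemma vadd_0l x : vadd vzero x = x.
Proof. rewrite vadd_comm; apply vadd_0. Qed.

Lemma vadd_cancel_l x y z : vadd x y = vadd x z -> y = z.
Proof.
  intro H.
  assert (E : forall w, vadd (vopp x) (vadd x w) = w).
  { intro w. rewrite vadd_assoc, (vadd_comm (vopp x) x), vadd_opp. apply vadd_0l. }
  rewrite <- (E y), <- (E z), H. reflexivity.
Qed.

Lemma vscal_0 x : vscal 0 x = vzero.
Proof.
  apply (vadd_cancel_l (vscal 0 x)). rewrite vadd_0, <- vscal_distr_s.
  f_equal. ring.
Qed.

Lemma vscal_zero a : vscal a (@vzero X) = vzero.
Proof. rewrite <- (vscal_0 vzero), vscal_assoc, Rmult_0_r. reflexivity. Qed.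

Lemma vopp_scal x : vopp x = vscal (-1) x.
Proof.
  apply (vadd_cancel_l x). rewrite vadd_opp.
  rewrite <- (vscal_1 x) at 1. rewrite <- vscal_distr_s, Rplus_opp_r, vscal_0.
  reflexivity.
Qed.

Lemma vnorm_zero : vnorm (@vzero X) = 0.
Proof. rewrite <- (vscal_0 vzero), vnorm_scal, Rabs_R0. ring. Qed.

Lemma vnorm_opp x : vnorm (vopp x) = vnorm x.
Proof. rewrite vopp_scal, vnorm_scal. replace (Rabs (-1)) with 1 by (rewrite Rabs_left; lra). ring. Qed.

Lemma vnorm_nonneg x : 0 <= vnorm x.
Proof.
  pose proof (vnorm_triangle x (vopp x)) as H. rewrite vadd_opp, vnorm_zero, vnorm_opp in H. lra.
Qed.

Lemma vsub_add x y : vadd (vsub x y) y = x.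
Proof. unfold vsub. rewrite <- vadd_assoc, (vadd_comm (vopp y)), vadd_opp. apply vadd_0. Qed.

Lemma vsub_opp x y : vsub y x = vscal (-1) (vsub x y).
Proof.
  unfold vsub. rewrite !vopp_scal, vscal_distr_v, vscal_assoc, vadd_comm.
  f_equal. replace (-1 * -1) with 1 by ring. symmetry. apply vscal_1.
Qed.

Lemma vnorm_vsub_sym x y : vnorm (vsub y x) = vnorm (vsub x y).
Proof. rewrite vsub_opp, vnorm_scal. replace (Rabs (-1)) with 1 by (rewrite Rabs_left; lra). ring. Qed.

Lemma vnorm_rev x y : Rabs (vnorm x - vnorm y) <= vnorm (vsub x y).
Proof.
  pose proof (vnorm_triangle (vsub x y) y) as H1. rewrite vsub_add in H1.
  pose proof (vnorm_triangle (vsub y x) x) as H2. rewrite vsub_add, vnorm_vsub_sym in H2.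
  apply Rabs_le; lra.
Qed.

Lemma vswap4 x y z w : vadd (vadd x y) (vadd z w) = vadd (vadd x z) (vadd y w).
Proof.
  rewrite <- !vadd_assoc. f_equal. rewrite !vadd_assoc. f_equal. apply vadd_comm.
Qed.

Lemma vnorm_eq0_iff x : vnorm x = 0 <-> x = vzero.
Proof. split; [apply vnorm_eq0| intros ->; apply vnorm_zero]. Qed.

Fixpoint vsum (k : nat) (g : nat -> X) : X :=
  match k with O => vzero | S k => vadd (vsum k g) (g k) end.

Definition comb (ys : nat -> X) (k : nat) (t : nat -> R) : X := vsum k (fun i => vscal (t i) (ys i)).

Lemma comb_lin ys k a s t :
  comb ys k (fun i => a * s i + t i) = vadd (vscal a (comb ys k s)) (comb ys k t).
Proof.
  unfold comb; induction k as [|k IH]; simpl.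
  - rewrite vscal_zero, vadd_0; reflexivity.
  - rewrite IH, vscal_distr_v, vswap4. f_equal.
    rewrite vscal_distr_s, vscal_assoc. reflexivity.
Qed.

Lemma comb_ext ys k s t : (forall i, (i < k)%nat -> s i = t i) -> comb ys k s = comb ys k t.
Proof.
  unfold comb; induction k as [|k IH]; intro H; simpl; [reflexivity|].
  rewrite IH by (intros; apply H; lia). rewrite (H k) by lia. reflexivity.
Qed.

Fixpoint rsum (k : nat) (f : nat -> R) : R :=
  match k with O => 0 | S k => rsum k f + f k end.

Lemma comb_norm ys k t : vnorm (comb ys k t) <= rsum k (fun i => Rabs (t i) * vnorm (ys i)).
Proof.
  unfold comb; induction k as [|k IH]; simpl.
  - rewrite vnorm_zero; lra.
  - eapply Rle_trans; [apply vnorm_triangle|]. rewrite vnorm_scal. lra.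
Qed.

Lemma comb_sub ys k s t : vsub (comb ys k s) (comb ys k t) = comb ys k (fun i => -1 * t i + s i).
Proof. rewrite comb_lin. unfold vsub. rewrite vopp_scal, vadd_comm. reflexivity. Qed.

Lemma comb_basis ys k i : (i < k)%nat -> comb ys k (fun l => if Nat.eqb l i then 1 else 0) = ys i.
Proof.
  unfold comb; induction k as [|k IH]; intro Hi; [lia|]. simpl.
  destruct (Nat.eqb_spec k i).
  - subst. rewrite vscal_1.
    assert (E : forall p, (p <= i)%nat -> vsum p (fun l => vscal (if Nat.eqb l i then 1 else 0) (ys l)) = vzero).
    { induction p; intro Hp; simpl; [reflexivity|]. rewrite IHp by lia.
      destruct (Nat.eqb_spec p i); [lia|]. rewrite vscal_0, vadd_0; reflexivity. }
    rewrite E by lia. apply vadd_0l.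
  - rewrite IH by lia. rewrite vscal_0. apply vadd_0.
Qed.

End VS.

Arguments comb {X}.
Arguments vsum {X}.

Section ML.
Variables (X Y : NormedSpace) (m : nat) (L : (nat -> X) -> Y).
Hypothesis hdep : depends_on_first X Y m L.
Hypothesis hml : multilinear X Y m L.

Lemma upd_same (f : nat -> X) j : upd f j (f j) = f.
Proof. apply functional_extensionality; intro i. unfold upd. destruct (Nat.eqb_spec i j); subst; auto. Qed.

Lemma ml_zero f j : (j < m)%nat -> L (upd f j vzero) = vzero.
Proof.
  intro Hj. pose proof (hml f j 1 vzero vzero Hj) as H.
  rewrite vscal_zero, vadd_0, vscal_1 in H.
  apply (vadd_cancel_l _ (L (upd f j vzero))). rewrite <- H, vadd_0. reflexivity.
Qed.

Lemma ml_scal f j a x : (j < m)%nat -> L (upd f j (vscal a x)) = vscal a (L (upd f j x)).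
Proof.
  intro Hj. pose proof (hml f j a x vzero Hj) as H.
  rewrite vadd_0, ml_zero, vadd_0 in H by exact Hj. exact H.
Qed.

Lemma ml_add f j x z : (j < m)%nat -> L (upd f j (vadd x z)) = vadd (L (upd f j x)) (L (upd f j z)).
Proof.
  intro Hj. pose proof (hml f j 1 x z Hj) as H. rewrite !vscal_1 in H. exact H.
Qed.

Fixpoint rprod (k : nat) (b : nat -> R) : R :=
  match k with O => 1 | S k => rprod k b * b k end.

Lemma L_scal_all (b : nat -> R) (f : nat -> X) p : (p <= m)%nat ->
  L (fun j => if Nat.ltb j p then vscal (b j) (f j) else f j) = vscal (rprod p b) (L f).
Proof.
  induction p as [|p IH]; intro Hp; simpl.
  - rewrite vscal_1. f_equal.
  - set (g := fun j => if Nat.ltb j p then vscal (b j) (f j) else f j).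
    assert (E : (fun j => if Nat.ltb j (S p) then vscal (b j) (f j) else f j) = upd g p (vscal (b p) (f p))).
    { apply functional_extensionality; intro i. unfold upd, g.
      destruct (Nat.eqb_spec i p); destruct (Nat.ltb_spec i (S p)), (Nat.ltb_spec i p); subst; auto; lia. }
    rewrite E, ml_scal by lia.
    assert (E2 : upd g p (f p) = g).
    { apply functional_extensionality; intro i. unfold upd, g.
      destruct (Nat.eqb_spec i p); [subst; rewrite Nat.ltb_irrefl; reflexivity| reflexivity]. }
    rewrite E2. unfold g. rewrite IH by lia. rewrite vscal_assoc. f_equal. ring.
Qed.

Lemma rprod_const k c : rprod k (fun _ => c) = c ^ k.
Proof. induction k; simpl; [reflexivity| rewrite IHk; ring]. Qed.

Lemma hat_scal c x : hat L (vscal c x) = vscal (c ^ m) (hat L x).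
Proof.
  unfold hat. rewrite <- rprod_const, <- (L_scal_all (fun _ => c) (fun _ => x) m) by lia.
  apply hdep. intros i Hi. rewrite (proj2 (Nat.ltb_lt i m) Hi). reflexivity.
Qed.

Lemma hat_zero : (1 <= m)%nat -> hat L vzero = vzero.
Proof.
  intro Hm. rewrite <- (vscal_0 _ vzero), hat_scal, pow_i by lia. apply vscal_0.
Qed.

Lemma hat_bound K : is_lub (hat_norm_set L) K -> (1 <= m)%nat ->
  forall z, vnorm (hat L z) <= K * vnorm z ^ m.
Proof.
  intros HK Hm z.
  destruct (Req_dec (vnorm z) 0) as [H0|H0].
  - apply vnorm_eq0 in H0. subst. rewrite hat_zero, vnorm_zero by exact Hm.
    assert (0 <= K).
    { apply (proj1 HK). exists vzero. split; [rewrite vnorm_zero; lra| rewrite hat_zero by exact Hm; rewrite vnorm_zero; reflexivity]. }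
    rewrite vnorm_zero, pow_i by lia. lra.
  - pose proof (vnorm_nonneg _ z). assert (Hz : 0 < vnorm z) by lra.
    assert (H1 : vnorm (hat L (vscal (/ vnorm z) z)) <= K).
    { apply (proj1 HK). exists (vscal (/ vnorm z) z). split; [|reflexivity].
      rewrite vnorm_scal, Rabs_right by (left; apply Rinv_0_lt_compat; lra).
      rewrite Rinv_l by lra. lra. }
    rewrite hat_scal, vnorm_scal in H1.
    rewrite Rabs_right in H1 by (left; apply pow_lt, Rinv_0_lt_compat; lra).
    rewrite pow_inv in H1.
    assert (Hp : 0 < vnorm z ^ m) by (apply pow_lt; lra).
    apply (Rmult_le_compat_r (vnorm z ^ m)) in H1; [|lra].
    rewrite Rmult_comm, <- Rmult_assoc, Rinv_r, Rmult_1_l in H1 by lra. exact H1.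
Qed.

End ML.

Arguments rprod : simpl never.

Lemma rsum_ext k f g : (forall i, (i < k)%nat -> f i = g i) -> rsum k f = rsum k g.
Proof. induction k; intro H; simpl; [reflexivity|]. rewrite IHk by (intros; apply H; lia). rewrite H by lia. reflexivity. Qed.

Lemma rsum_lin k a f g : rsum k (fun i => a * f i + g i) = a * rsum k f + rsum k g.
Proof. induction k; simpl; [ring| rewrite IHk; ring]. Qed.

Lemma rsum_plus k f g : rsum k (fun i => f i + g i) = rsum k f + rsum k g.
Proof. induction k; simpl; [ring| rewrite IHk; ring]. Qed.

Lemma rsum_scal k a f : rsum k (fun i => a * f i) = a * rsum k f.
Proof. induction k; simpl; [ring| rewrite IHk; ring]. Qed.

Lemma rsum_nonneg k f : (forall i, (i < k)%nat -> 0 <= f i) -> 0 <= rsum k f.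
Proof. induction k; intro H; simpl; [lra|]. pose proof (H k ltac:(lia)). pose proof (IHk ltac:(intros; apply H; lia)). lra. Qed.

Lemma rsum_le k f g : (forall i, (i < k)%nat -> f i <= g i) -> rsum k f <= rsum k g.
Proof. induction k; intro H; simpl; [lra|]. pose proof (H k ltac:(lia)). pose proof (IHk ltac:(intros; apply H; lia)). lra. Qed.

Lemma rsum_const k c : rsum k (fun _ => c) = INR k * c.
Proof. induction k; [simpl; ring|]. cbn [rsum]. rewrite IHk, S_INR. ring. Qed.

Lemma rsum_sq_zero k f : rsum k (fun i => f i * f i) <= 0 -> forall i, (i < k)%nat -> f i = 0.
Proof.
  induction k; intros H i Hi; [lia|]. simpl in H.
  assert (0 <= rsum k (fun i => f i * f i)) by (apply rsum_nonneg; intros j _; apply Rle_0_sqr).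
  assert (f k * f k = 0) by nra.
  destruct (Nat.eq_dec i k); [subst; nra|]. apply IHk; [nra|lia].
Qed.

Lemma rsum_single k i c : (i < k)%nat -> rsum k (fun l => if Nat.eqb l i then c else 0) = c.
Proof.
  induction k; intro Hi; [lia|]. simpl. destruct (Nat.eqb_spec k i).
  - subst. rewrite (rsum_ext _ _ (fun _ => 0)), rsum_const by (intros l Hl; destruct (Nat.eqb_spec l i); [lia|auto]). ring.
  - rewrite IHk by lia. ring.
Qed.

Lemma rsum_sq_expand k a t C : rsum k (fun i => (a i - C * t i) * (a i - C * t i)) =
     rsum k (fun i => a i * a i) - 2 * C * rsum k (fun i => a i * t i) + C * C * rsum k (fun i => t i * t i).
Proof. induction k; simpl; [ring|]. rewrite IHk. ring. Qed.

Lemma CS_unit k a t : rsum k (fun i => t i * t i) = 1 ->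
  rsum k (fun i => a i * t i) * rsum k (fun i => a i * t i) <= rsum k (fun i => a i * a i).
Proof.
  intro Ht. set (C := rsum k (fun i => a i * t i)).
  pose proof (rsum_sq_expand k a t C) as E.
  assert (0 <= rsum k (fun i => (a i - C * t i) * (a i - C * t i))) by (apply rsum_nonneg; intros i _; apply Rle_0_sqr).
  rewrite E, Ht in H. fold C in H. nra.
Qed.

Definition cont_on (d:nat) (F : (nat->R)->R) := forall (v : nat -> R) (eps : R), 0 < eps ->
  exists del, 0 < del /\ forall w, (forall i, (i<d)%nat -> Rabs (w i - v i) < del) -> Rabs (F w - F v) < eps.
Definition dep_on (d : nat) (F : (nat->R)->R) := forall v w : nat -> R, (forall i, (i<d)%nat -> v i = w i) -> F v = F w.
Definition cube (d : nat) (v : nat -> R) := forall i, (i<d)%nat -> Rabs (v i) <= 1.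

Lemma cont_const d c : cont_on d (fun _ => c).
Proof. intros v e He. exists 1. split; [lra|]. intros. rewrite Rminus_diag, Rabs_R0. exact He. Qed.

Lemma cont_coord d k : (k < d)%nat -> cont_on d (fun v => v k).
Proof. intros Hk v e He. exists e. split; [exact He|]. intros w Hw. apply Hw, Hk. Qed.

Lemma cont_plus d F G : cont_on d F -> cont_on d G -> cont_on d (fun v => F v + G v).
Proof.
  intros cF cG v e He.
  destruct (cF v (e/2) ltac:(lra)) as [d1 [Hd1 H1]].
  destruct (cG v (e/2) ltac:(lra)) as [d2 [Hd2 H2]].
  exists (Rmin d1 d2). split; [apply Rmin_pos; lra|]. intros w Hw.
  assert (A1 := H1 w ltac:(intros i Hi; specialize (Hw i Hi); pose proof (Rmin_l d1 d2); lra)).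
  assert (A2 := H2 w ltac:(intros i Hi; specialize (Hw i Hi); pose proof (Rmin_r d1 d2); lra)).
  replace (F w + G w - (F v + G v)) with ((F w - F v) + (G w - G v)) by ring.
  eapply Rle_lt_trans; [apply Rabs_triang|]. lra.
Qed.

Lemma cont_mult d F G : cont_on d F -> cont_on d G -> cont_on d (fun v => F v * G v).
Proof.
  intros cF cG v e He.
  set (a := Rabs (F v)). set (b := Rabs (G v)).
  assert (Ha : 0 <= a) by apply Rabs_pos. assert (Hb : 0 <= b) by apply Rabs_pos.
  destruct (cF v (e / (2 * (b + 1))) ltac:(apply Rdiv_lt_0_compat; lra)) as [d1 [Hd1 H1]].
  destruct (cG v (Rmin 1 (e / (2 * (a + 1)))) ltac:(apply Rmin_pos; [lra| apply Rdiv_lt_0_compat; lra])) as [d2 [Hd2 H2]].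
  exists (Rmin d1 d2). split; [apply Rmin_pos; lra|]. intros w Hw.
  assert (A1 := H1 w ltac:(intros i Hi; specialize (Hw i Hi); pose proof (Rmin_l d1 d2); lra)).
  assert (A2 := H2 w ltac:(intros i Hi; specialize (Hw i Hi); pose proof (Rmin_r d1 d2); lra)).
  pose proof (Rmin_l 1 (e / (2 * (a + 1)))). pose proof (Rmin_r 1 (e / (2 * (a + 1)))).
  replace (F w * G w - F v * G v) with ((F w - F v) * G w + F v * (G w - G v)) by ring.
  eapply Rle_lt_trans; [apply Rabs_triang|]. rewrite !Rabs_mult.
  assert (HG : Rabs (G w) <= b + 1).
  { replace (G w) with (G v + (G w - G v)) by ring. eapply Rle_trans; [apply Rabs_triang|]. unfold b. lra. }
  assert (T1 : Rabs (F w - F v) * Rabs (G w) < e / 2).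
  { eapply Rle_lt_trans. apply Rmult_le_compat_l; [apply Rabs_pos| exact HG].
    assert (E1 : e / (2 * (b + 1)) * (b + 1) = e / 2) by (field; lra).
    rewrite <- E1. apply Rmult_lt_compat_r; lra. }
  assert (T2 : Rabs (F v) * Rabs (G w - G v) <= (a + 1) * (e / (2 * (a + 1)))).
  { apply Rmult_le_compat; try apply Rabs_pos; fold a; lra. }
  assert (E2 : (a + 1) * (e / (2 * (a + 1))) = e / 2) by (field; lra).
  lra.
Qed.

Lemma cont_ext d F G : (forall v, F v = G v) -> cont_on d F -> cont_on d G.
Proof. intros E cF v e He. destruct (cF v e He) as [del [Hd H]]. exists del; split; auto. intros w Hw. rewrite <- !E. auto. Qed.

Lemma cont_abs d F : cont_on d F -> cont_on d (fun v => Rabs (F v)).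
Proof.
  intros cF v e He. destruct (cF v e He) as [del [Hd H]]. exists del; split; auto.
  intros w Hw. eapply Rle_lt_trans; [apply Rabs_triang_inv2|]. auto.
Qed.

Lemma cont_sum d k (F : nat -> (nat -> R) -> R) : (forall i, (i < k)%nat -> cont_on d (F i)) ->
  cont_on d (fun v => rsum k (fun i => F i v)).
Proof.
  induction k; intro H; simpl.
  - apply cont_const.
  - apply cont_plus; [apply IHk; intros; apply H; lia| apply H; lia].
Qed.

Lemma rsum_nonneg_zero k f : (forall i, (i < k)%nat -> 0 <= f i) -> rsum k f = 0 -> forall i, (i < k)%nat -> f i = 0.
Proof.
  induction k; intros H0 H i Hi; [lia|]. simpl in H.
  assert (0 <= rsum k f) by (apply rsum_nonneg; intros; apply H0; lia).
  assert (0 <= f k) by (apply H0; lia).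
  destruct (Nat.eq_dec i k); [subst; lra|]. apply IHk; [intros; apply H0; lia|lra|lia].
Qed.

Lemma rsum_term_le k f i : (forall l, (l < k)%nat -> 0 <= f l) -> (i < k)%nat -> f i <= rsum k f.
Proof.
  induction k; intros H0 Hi; [lia|]. simpl.
  assert (0 <= rsum k f) by (apply rsum_nonneg; intros; apply H0; lia).
  destruct (Nat.eq_dec i k); [subst; lra|].
  assert (f i <= rsum k f) by (apply IHk; [intros; apply H0; lia|lia]). pose proof (H0 k ltac:(lia)). lra.
Qed.

Lemma comb_zero (X : NormedSpace) (ys : nat -> X) k t : (forall i, (i < k)%nat -> t i = 0) -> comb ys k t = vzero.
Proof.
  unfold comb; induction k; intro H; simpl; [reflexivity|].
  rewrite IHk by (intros; apply H; lia). rewrite H, vscal_0, vadd_0 by lia. reflexivity.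
Qed.

Section EV.
Variable Y : NormedSpace.
Variables P Q R : Y.
Definition ev p q r := vadd (vadd (vscal p P) (vscal q Q)) (vscal r R).
Lemma ev_add p q r p' q' r' : vadd (ev p q r) (ev p' q' r') = ev (p+p') (q+q') (r+r').
Proof. unfold ev. rewrite vswap4, (vswap4 _ (vscal p P)), <- !vscal_distr_s. reflexivity. Qed.
Lemma ev_scal c p q r : vscal c (ev p q r) = ev (c*p) (c*q) (c*r).
Proof. unfold ev. rewrite !vscal_distr_v, !vscal_assoc. reflexivity. Qed.
Lemma ev_P : P = ev 1 0 0.
Proof. unfold ev. rewrite !vscal_0, !vadd_0, vscal_1. reflexivity. Qed.
Lemma ev_Q : Q = ev 0 1 0.
Proof. unfold ev. rewrite !vscal_0, vadd_0, vadd_0l, vscal_1. reflexivity. Qed.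
Lemma ev_R : R = ev 0 0 1.
Proof. unfold ev. rewrite !vscal_0, vadd_0, vadd_0l, vscal_1. reflexivity. Qed.
End EV.

Lemma polar4 (Y : NormedSpace) (P Q R : Y) :
  vadd (vadd (vscal 1 (vadd (vscal 1 P) Q)) (vadd (vscal 1 Q) R))
       (vscal (-1) (vadd (vscal (-1) (vadd (vscal (-1) R) Q)) (vadd (vscal (-1) Q) P))) = vscal 4 Q.
Proof.
  pose proof (ev_add _ P Q R) as A. pose proof (ev_scal _ P Q R) as S.
  pose proof (ev_P _ P Q R) as hP. pose proof (ev_Q _ P Q R) as hQ. pose proof (ev_R _ P Q R) as hR.
  set (E := ev Y P Q R) in *. clearbody E.
  rewrite hP, hQ, hR. repeat progress rewrite ?S, ?A. f_equal; ring.
Qed.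

Module Br.
Import all_boot all_order all_algebra.
Import all_classical all_reals all_analysis.
Import Rstruct Rstruct_topology.
Import Order.TTheory GRing.Theory Num.Theory.
Import numFieldNormedType.Exports.
Local Open Scope classical_set_scope.
Local Open Scope ring_scope.

Definition toN d (r : 'rV[R]_d) : nat -> R := fun k => oapp (fun i : 'I_d => r ord0 i) 0 (insub k).
Arguments toN {d}.
Definition ofN d (v : nat -> R) : 'rV[R]_d := \row_(i < d) v i.

Lemma toN_ofN d v i : (i < d)%N -> toN (ofN d v) i = v i.
Proof. by move=> id; rewrite /toN insubT /= mxE. Qed.

Lemma toN_lt d (r : 'rV[R]_d) (i : 'I_d) : toN r i = r ord0 i.
Proof. by rewrite /toN valK. Qed.

Lemma cont_toN d F : cont_on d F -> continuous (fun r : 'rV[R]_d => F (toN r)).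
Proof.
move=> cF r. rewrite /continuous_at. Fail apply/cvgrPdist_lt. apply/(@cvgrPdist_lt R R^o _ (nbhs r) (nbhs_filter r)) => e e0.
have e0' : Rlt 0 e by apply/RltP.
have [del [del0 Hdel]] := cF (toN r) e e0'.
apply/nbhs_ballP; exists del; first by apply/RltP.
move=> s /= [_ rs].
rewrite distrC; apply/RltP; apply: Hdel => i /ssrnat.ltP id.
rewrite -[i]/(nat_of_ord (Ordinal id)) !toN_lt; apply/RltP.
have := rs ord0 (Ordinal id). rewrite /ball /= /ball_ /=. by rewrite distrC.
Qed.

Lemma RabsN (x : R) : Rabs x = `|x|. Proof. by []. Qed.

Lemma EVT_gen d F G : cont_on d F -> cont_on d G -> dep_on d F -> dep_on d G ->
  (exists v0, cube d v0 /\ G v0 = 0%coqR) ->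
  exists v, cube d v /\ G v = 0%coqR /\ forall w, cube d w -> G w = 0%coqR -> Rle (F w) (F v).
Proof.
move=> cF cG dF dG [v0 [cv0 Gv0]].
pose A := [set r : 'rV[R]_d | forall i, `[(-1)%R, 1%R]%classic (r ord0 i)] `&`
  ((fun r => G (toN r)) @^-1` [set 0%R]).
have cA : compact A.
  have := @rV_compact R d (fun=> `[(-1)%R, 1%R]%classic) (fun=> @segment_compact _ _ _). move=> H. apply: compact_closedI; first exact: H.
  have H2 := (proj1 (@continuous_closedP _ _ (fun r : 'rV[R]_d => G (toN r))) (cont_toN _ _ cG) [set 0%R]). have H3 : closed [set 0%R : R] by apply: closed_eq. exact: H2.
have inA w : cube d w -> G w = 0%coqR -> A (ofN d w).
  move=> cw Gw; split.
    move=> i /=; rewrite mxE /= in_itv /=; have := cw i ltac:(apply/ssrnat.ltP; exact: ltn_ord).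
    move=> /RleP; rewrite RabsN ler_norml => /andP[-> ->] //.
  rewrite /=; transitivity (G w) => //; apply: dG => i /ssrnat.ltP id; by rewrite toN_ofN.
have A0 : A !=set0 by exists (ofN d v0); apply: inA.
have cf : {within A, continuous (fun r => F (toN r))}.
  by apply: continuous_subspaceT; exact: cont_toN.
have [c cA' cmax] := compact_EVT_max A0 cA cf.
move: cA'; rewrite inE => -[cc Gc].
exists (toN c); split; [|split] => //.
  move=> i /ssrnat.ltP id; rewrite -[i]/(nat_of_ord (Ordinal id)) toN_lt; apply/RleP.
  by rewrite RabsN ler_norml; have := cc (Ordinal id); rewrite /= in_itv /=.
move=> w cw Gw; apply/RleP.
have -> : F w = F (toN (ofN d w)) by apply: dF => i /ssrnat.ltP id; rewrite toN_ofN.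
by apply: cmax; rewrite inE; apply: inA.
Qed.

End Br.

Lemma EVT_gen : forall d F G, cont_on d F -> cont_on d G -> dep_on d F -> dep_on d G ->
  (exists v0, cube d v0 /\ G v0 = 0) ->
  exists v, cube d v /\ G v = 0 /\ forall w, cube d w -> G w = 0 -> F w <= F v.
Proof. intros d F G cF cG dF dG H. exact (Br.EVT_gen d F G cF cG dF dG H). Qed.

Section Kellogg.
Variables (X Y : NormedSpace) (m n : nat) (L : (nat -> X) -> Y) (ys : nat -> X) (M : R).
Hypothesis hL : is_csm X Y m L.
Hypothesis hm : (1 <= m)%nat.
Hypothesis hn : (1 <= n)%nat.
Hypothesis HM : forall t, rsum n (fun i => t i * t i) = 1 -> vnorm (hat L (comb ys n t)) <= M.

Let hdep : depends_on_first X Y m L := proj1 hL.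
Let hml : multilinear X Y m L := proj1 (proj2 hL).
Let hsym : symmetric_map X Y m L := proj1 (proj2 (proj2 hL)).
Let hcont : continuous_map X Y m L := proj2 (proj2 (proj2 hL)).

Definition unitT (u : nat -> nat -> R) := forall j, (j < m)%nat -> rsum n (fun i => u j i * u j i) = 1.
Definition Aop u := L (fun j => comb ys n (u j)).
Definition Fp u := vnorm (Aop u).
Definition Gq (u : nat -> nat -> R) := rsum m (fun j => Rabs (rsum n (fun i => u j i * u j i) + -1)).
Definition Phi (u : nat -> nat -> R) := rsum n (fun i => rsum m (fun j => u j i) * rsum m (fun j => u j i)).
Definition unflat (v : nat -> R) j i := v (j * n + i)%nat.
Definition flat (u : nat -> nat -> R) k := u (k / n)%nat (k mod n)%nat.
Definition depT (H : (nat -> nat -> R) -> R) :=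
  forall u u', (forall j i, (j < m)%nat -> (i < n)%nat -> u j i = u' j i) -> H u = H u'.

Lemma unflat_flat u j i : (i < n)%nat -> unflat (flat u) j i = u j i.
Proof.
  intro Hi. unfold unflat, flat. rewrite Nat.div_add_l by lia. rewrite Nat.div_small by lia.
  assert (E : ((j * n + i) mod n = i)%nat) by (rewrite Nat.add_comm, Nat.Div0.mod_add; apply Nat.mod_small; lia).
  rewrite E. f_equal. lia.
Qed.

Lemma depT_flat H u : depT H -> H (unflat (flat u)) = H u.
Proof. intro D. apply D. intros. apply unflat_flat; auto. Qed.

Lemma dep_on_unflat H : depT H -> dep_on (m * n) (fun v => H (unflat v)).
Proof. intros D v w E. apply D. intros j i Hj Hi. unfold unflat. apply E. nia. Qed.

Lemma Aop_dep : forall u u', (forall j i, (j < m)%nat -> (i < n)%nat -> u j i = u' j i) -> Aop u = Aop u'.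
Proof. intros u u' E. unfold Aop. apply hdep. intros j Hj. apply comb_ext. intros; apply E; auto. Qed.

Lemma Fp_dep : depT Fp.
Proof. intros u u' E. unfold Fp. rewrite (Aop_dep u u' E). reflexivity. Qed.

Lemma Gq_dep : depT Gq.
Proof.
  intros u u' E. unfold Gq. apply rsum_ext. intros j Hj. f_equal. f_equal. apply rsum_ext.
  intros i Hi. rewrite E by auto. reflexivity.
Qed.

Lemma Phi_dep : depT Phi.
Proof.
  intros u u' E. unfold Phi. apply rsum_ext. intros i Hi.
  rewrite (rsum_ext m (fun j => u j i) (fun j => u' j i)) by (intros; apply E; auto). reflexivity.
Qed.

Lemma cont_uc j i : (j < m)%nat -> (i < n)%nat -> cont_on (m * n) (fun v => unflat v j i).
Proof. intros. unfold unflat. apply cont_coord. nia. Qed.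

Lemma Gq_cont : cont_on (m * n) (fun v => Gq (unflat v)).
Proof.
  unfold Gq. apply cont_sum. intros j Hj. apply cont_abs. apply cont_plus; [|apply cont_const].
  apply cont_sum. intros i Hi. apply cont_mult; apply cont_uc; auto.
Qed.

Lemma Phi_cont : cont_on (m * n) (fun v => Phi (unflat v)).
Proof.
  unfold Phi. apply cont_sum. intros i Hi. apply cont_mult; apply cont_sum; intros; apply cont_uc; auto.
Qed.

Lemma Fp_cont : cont_on (m * n) (fun v => Fp (unflat v)).
Proof.
  intros v e He.
  destruct (hcont (fun j => comb ys n (unflat v j)) e He) as [del [Hdel H]].
  set (C := rsum n (fun i => vnorm (ys i))).
  assert (HC : 0 <= C) by (apply rsum_nonneg; intros; apply vnorm_nonneg).
  exists (del / (C + 1)). split; [apply Rdiv_lt_0_compat; lra|].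
  intros w Hw. unfold Fp, Aop.
  eapply Rle_lt_trans; [apply vnorm_rev|]. apply H.
  intros j Hj. rewrite comb_sub. eapply Rle_lt_trans; [apply comb_norm|].
  apply Rle_lt_trans with (rsum n (fun i => del / (C + 1) * vnorm (ys i))).
  - apply rsum_le. intros i Hi. apply Rmult_le_compat_r; [apply vnorm_nonneg|].
    replace (-1 * unflat v j i + unflat w j i) with (w (j * n + i)%nat - v (j * n + i)%nat)
      by (unfold unflat; ring).
    left. apply Hw. nia.
  - rewrite rsum_scal. fold C.
    assert (Hq : 0 < del / (C + 1)) by (apply Rdiv_lt_0_compat; lra).
    replace (del / (C + 1) * C) with (del - del / (C + 1)) by (field; lra). lra.
Qed.


Definition updT (u : nat -> nat -> R) j (s : nat -> R) := fun l => if Nat.eqb l j then s else u l.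

Section Pair.
Variables (u : nat -> nat -> R) (j1 j2 : nat).
Hypothesis hj1 : (j1 < m)%nat.
Hypothesis hj2 : (j2 < m)%nat.
Hypothesis hj12 : j1 <> j2.

Definition gf s s' := fun l => comb ys n (updT (updT u j1 s) j2 s' l).
Definition B s s' := L (gf s s').

Lemma B_Aop s s' : B s s' = Aop (updT (updT u j1 s) j2 s').
Proof. reflexivity. Qed.

Lemma gf_upd1 s s' s0 : gf s s' = upd (gf s0 s') j1 (comb ys n s).
Proof.
  apply functional_extensionality; intro l. unfold gf, upd, updT.
  destruct (Nat.eqb_spec l j1), (Nat.eqb_spec l j2); subst; try reflexivity; lia.
Qed.

Lemma gf_upd2 s s' s0 : gf s s' = upd (gf s s0) j2 (comb ys n s').
Proof.
  apply functional_extensionality; intro l. unfold gf, upd, updT.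
  destruct (Nat.eqb_spec l j1), (Nat.eqb_spec l j2); subst; try reflexivity; lia.
Qed.

Lemma B_lin1 a s t s' : B (fun i => a * s i + t i) s' = vadd (vscal a (B s s')) (B t s').
Proof.
  unfold B. rewrite (gf_upd1 _ s' s), comb_lin, (hml (gf s s') j1 a (comb ys n s) (comb ys n t) hj1).
  rewrite <- (gf_upd1 s s' s), <- (gf_upd1 t s' s). reflexivity.
Qed.

Lemma B_sym s s' : B s s' = B s' s.
Proof.
  unfold B.
  set (sg := fun l => if Nat.eqb l j1 then j2 else if Nat.eqb l j2 then j1 else l).
  assert (E : (fun l => gf s' s (sg l)) = gf s s').
  { apply functional_extensionality; intro l. unfold gf, updT, sg.
    destruct (Nat.eqb_spec l j1), (Nat.eqb_spec l j2); subst; try lia.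
    - rewrite Nat.eqb_refl. destruct (Nat.eqb_spec j2 j1); [lia|]. reflexivity.
    - rewrite Nat.eqb_refl. destruct (Nat.eqb_spec j1 j2); [lia|]. reflexivity.
    - destruct (Nat.eqb_spec l j1), (Nat.eqb_spec l j2); try lia. reflexivity. }
  rewrite <- E. apply hsym.
  - intros i Hi. unfold sg. destruct (Nat.eqb_spec i j1), (Nat.eqb_spec i j2); lia.
  - intros i k Hi Hk. unfold sg. destruct (Nat.eqb_spec i j1), (Nat.eqb_spec i j2), (Nat.eqb_spec k j1), (Nat.eqb_spec k j2); lia.
Qed.

Lemma B_zero1 s s' : (forall i, (i < n)%nat -> s i = 0) -> B s s' = vzero.
Proof.
  intro H. unfold B. rewrite (gf_upd1 _ s' s), comb_zero by exact H. apply (ml_zero X Y m L hml); auto.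
Qed.

Lemma B_scal1 a s s' : B (fun i => a * s i) s' = vscal a (B s s').
Proof.
  replace (fun i => a * s i) with (fun i => a * s i + (fun _ => 0) i)
    by (apply functional_extensionality; intro; ring).
  rewrite B_lin1, (B_zero1 (fun _ => 0)) by auto. apply vadd_0.
Qed.

Lemma B_scal2 a s s' : B s (fun i => a * s' i) = vscal a (B s s').
Proof. rewrite B_sym, B_scal1, B_sym. reflexivity. Qed.

Lemma B_orig : B (u j1) (u j2) = Aop u.
Proof.
  rewrite B_Aop. f_equal. apply functional_extensionality; intro l. apply functional_extensionality; intro i.
  unfold updT. destruct (Nat.eqb_spec l j2), (Nat.eqb_spec l j1); subst; reflexivity.
Qed.

Lemma unitT_upd2 s s' : unitT u -> rsum n (fun i => s i * s i) = 1 -> rsum n (fun i => s' i * s' i) = 1 ->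
  unitT (updT (updT u j1 s) j2 s').
Proof.
  intros Hu Hs Hs' j Hj. unfold updT. destruct (Nat.eqb_spec j j2); auto. destruct (Nat.eqb_spec j j1); auto.
Qed.

Lemma polar_ineq : 4 * vnorm (B (u j1) (u j2)) <=
  vnorm (B (fun i => 1 * u j1 i + u j2 i) (fun i => 1 * u j1 i + u j2 i)) +
  vnorm (B (fun i => -1 * u j2 i + u j1 i) (fun i => -1 * u j2 i + u j1 i)).
Proof.
  set (u1 := u j1). set (u2 := u j2).
  set (a := fun i => 1 * u1 i + u2 i). set (b := fun i => -1 * u2 i + u1 i).
  assert (Ea : B a a = vadd (vscal 1 (vadd (vscal 1 (B u1 u1)) (B u1 u2))) (vadd (vscal 1 (B u1 u2)) (B u2 u2))).
  { unfold a at 1. rewrite B_lin1. rewrite (B_sym u1 a), (B_sym u2 a). unfold a. rewrite !B_lin1, (B_sym u2 u1). reflexivity. }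
  assert (Eb : B b b = vadd (vscal (-1) (vadd (vscal (-1) (B u2 u2)) (B u1 u2))) (vadd (vscal (-1) (B u1 u2)) (B u1 u1))).
  { unfold b at 1. rewrite B_lin1. rewrite (B_sym u2 b), (B_sym u1 b). unfold b. rewrite !B_lin1, (B_sym u2 u1). reflexivity. }
  pose proof (polar4 Y (B u1 u1) (B u1 u2) (B u2 u2)) as P4.
  rewrite <- Ea in P4.
  replace (vadd (vscal (-1) (vadd (vscal (-1) (B u2 u2)) (B u1 u2))) (vadd (vscal (-1) (B u1 u2)) (B u1 u1)))
    with (B b b) in P4.
  pose proof (vnorm_triangle (B a a) (vscal (-1) (B b b))) as T. rewrite P4, !vnorm_scal in T.
  replace (Rabs 4) with 4 in T by (rewrite Rabs_right; lra).
  replace (Rabs (-1)) with 1 in T by (rewrite Rabs_left; lra). lra.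
Qed.

End Pair.

Lemma rsum_quad k f g c : rsum k (fun i => (f i + c * g i) * (f i + c * g i)) =
  rsum k (fun i => f i * f i) + 2 * c * rsum k (fun i => f i * g i) + c * c * rsum k (fun i => g i * g i).
Proof. induction k; simpl; [ring|]. rewrite IHk. ring. Qed.

Lemma rsum_updT k (u : nat -> nat -> R) j0 s i : (j0 < k)%nat ->
  rsum k (fun j => updT u j0 s j i) = rsum k (fun j => u j i) - u j0 i + s i.
Proof.
  induction k; intro H; [lia|]. simpl. unfold updT at 2. destruct (Nat.eqb_spec k j0).
  - subst. rewrite (rsum_ext _ _ (fun j => u j i)). ring.
    intros l Hl. unfold updT. destruct (Nat.eqb_spec l j0); [lia|reflexivity].
  - rewrite IHk by lia. ring.
Qed.

Lemma Fp_nonneg u : 0 <= Fp u.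
Proof. apply vnorm_nonneg. Qed.

Section PairEq.
Variables (u : nat -> nat -> R) (N : R).
Hypothesis Hu : unitT u.
Hypothesis HFu : Fp u = N.
Hypothesis HN : forall w, unitT w -> Fp w <= N.
Hypothesis HP : forall w, unitT w -> Fp w = N -> Phi w <= Phi u.
Variables (j1 j2 : nat).
Hypothesis hj1 : (j1 < m)%nat.
Hypothesis hj2 : (j2 < m)%nat.
Hypothesis hj12 : j1 <> j2.

Let S i := rsum m (fun j => u j i).

Lemma Phi_upd2 s s' : Phi (updT (updT u j1 s) j2 s') =
  rsum n (fun i => (S i - u j1 i + s i - u j2 i + s' i) * (S i - u j1 i + s i - u j2 i + s' i)).
Proof.
  unfold Phi. apply rsum_ext. intros i Hi. rewrite rsum_updT, rsum_updT by auto.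
  assert (E : updT u j1 s j2 = u j2) by (unfold updT; destruct (Nat.eqb_spec j2 j1); [lia|reflexivity]).
  rewrite E. reflexivity.
Qed.

Lemma qb s : vnorm (B u j1 j2 s s) <= N * rsum n (fun i => s i * s i).
Proof.
  assert (HN0 : 0 <= N) by (rewrite <- HFu; apply Fp_nonneg).
  assert (Hs0 : 0 <= rsum n (fun i => s i * s i)) by (apply rsum_nonneg; intros; apply Rle_0_sqr).
  destruct (Req_dec (rsum n (fun i => s i * s i)) 0) as [Z|Z].
  - rewrite (B_zero1 u j1 j2 hj1 hj2 hj12) by (apply rsum_sq_zero; lra). rewrite vnorm_zero. nra.
  - set (q := rsum n (fun i => s i * s i)) in *.
    set (c := sqrt q). assert (Hc : 0 < c) by (apply sqrt_lt_R0; lra).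
    assert (Hcc : c * c = q) by (apply sqrt_sqrt; lra).
    set (sh := fun i => / c * s i).
    assert (Hsh : rsum n (fun i => sh i * sh i) = 1).
    { unfold sh. rewrite (rsum_ext _ _ (fun i => (/ c * / c) * (s i * s i))) by (intros; ring).
      rewrite rsum_scal. fold q. rewrite <- Hcc. field. lra. }
    pose proof (HN _ (unitT_upd2 u j1 j2 sh sh Hu Hsh Hsh)) as H.
    unfold Fp in H. rewrite <- B_Aop in H. unfold sh in H.
    rewrite (B_scal1 u j1 j2 hj1 hj2 hj12), (B_scal2 u j1 j2 hj1 hj2 hj12), !vnorm_scal in H.
    rewrite Rabs_right in H by (left; apply Rinv_0_lt_compat; lra).
    rewrite <- Hcc.
    assert (Hi : 0 < / c) by (apply Rinv_0_lt_compat; lra).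
    apply (Rmult_le_compat_l (c * c)) in H; [|nra].
    replace (c * c * (/ c * (/ c * vnorm (B u j1 j2 s s)))) with (vnorm (B u j1 j2 s s)) in H by (field; lra).
    lra.
Qed.

Lemma flip_ge1 (first : bool) : 1 <= rsum n (fun i => S i * (if first then u j1 i else u j2 i)).
Proof.
  set (s := fun i => (if first then -1 else 1) * u j1 i).
  set (s' := fun i => (if first then 1 else -1) * u j2 i).
  assert (U1 : rsum n (fun i => s i * s i) = 1).
  { transitivity (rsum n (fun i => u j1 i * u j1 i)); [|apply Hu; auto]. unfold s. apply rsum_ext. intros. destruct first; ring. }
  assert (U2 : rsum n (fun i => s' i * s' i) = 1).
  { transitivity (rsum n (fun i => u j2 i * u j2 i)); [|apply Hu; auto]. unfold s'. apply rsum_ext. intros. destruct first; ring. }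
  assert (F1 : Fp (updT (updT u j1 s) j2 s') = N).
  { unfold Fp. rewrite <- B_Aop. unfold s, s'.
    rewrite (B_scal1 u j1 j2 hj1 hj2 hj12), (B_scal2 u j1 j2 hj1 hj2 hj12), !vnorm_scal, (B_orig u j1 j2 hj2 hj12).
    rewrite <- HFu. unfold Fp. destruct first; rewrite ?Rabs_R1; replace (Rabs (-1)) with 1 by (rewrite Rabs_left; lra); ring. }
  pose proof (HP _ (unitT_upd2 u j1 j2 s s' Hu U1 U2) F1) as H.
  rewrite Phi_upd2 in H. unfold Phi in H. fold S in H.
  set (g := fun i => if first then u j1 i else u j2 i).
  rewrite (rsum_ext n _ (fun i => (S i + -2 * g i) * (S i + -2 * g i))) in H.
  2:{ intros i Hi. unfold s, s', g. destruct first; ring. }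
  rewrite rsum_quad in H.
  assert (Hg : rsum n (fun i => g i * g i) = 1) by (unfold g; destruct first; [apply Hu| apply Hu]; auto).
  rewrite Hg in H.
  change (rsum n (fun i => rsum m (fun j => u j i) * rsum m (fun j => u j i))) with (rsum n (fun i => S i * S i)) in H.
  change (rsum n (fun i => S i * (if first then u j1 i else u j2 i))) with (rsum n (fun i => S i * g i)). lra.
Qed.

Lemma pair_eq : forall i, (i < n)%nat -> u j1 i = u j2 i.
Proof.
  set (u1 := u j1). set (u2 := u j2).
  set (a := fun i => 1 * u1 i + u2 i). set (b := fun i => -1 * u2 i + u1 i).
  assert (HN0 : 0 <= N) by (rewrite <- HFu; apply Fp_nonneg).
  assert (Hab : rsum n (fun i => a i * a i) + rsum n (fun i => b i * b i) = 4).
  { rewrite <- rsum_plus. rewrite (rsum_ext _ _ (fun i => 2 * (u1 i * u1 i) + 2 * (u2 i * u2 i))).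
    - rewrite rsum_plus, !rsum_scal. unfold u1, u2. rewrite (Hu j1), (Hu j2) by auto. ring.
    - intros; unfold a, b; ring. }
  pose proof (polar_ineq u j1 j2 hj1 hj2 hj12) as P.
  rewrite (B_orig u j1 j2 hj2 hj12) in P. fold u1 u2 a b in P. fold (Fp u) in P. rewrite HFu in P.
  pose proof (qb a) as Qa. pose proof (qb b) as Qb.
  assert (Ea : vnorm (B u j1 j2 a a) = N * rsum n (fun i => a i * a i)) by nra.
  assert (Sa : 2 <= rsum n (fun i => S i * a i)).
  { pose proof (flip_ge1 true) as F1. pose proof (flip_ge1 false) as F2. simpl in F1, F2.
    rewrite (rsum_ext _ _ (fun i => 1 * (S i * u1 i) + S i * u2 i)) by (intros; unfold a; ring).
    rewrite rsum_lin. fold u1 in F1. fold u2 in F2. lra. }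
  cut (forall i, (i < n)%nat -> u1 i - u2 i = 0); [intros Hc0 i Hi; apply Rminus_diag_uniq; apply Hc0; exact Hi|].
  apply rsum_sq_zero with (f := fun i => u1 i - u2 i).
  apply Rnot_gt_le. intro Hpos.
  assert (Hb : rsum n (fun i => b i * b i) = rsum n (fun i => (u1 i - u2 i) * (u1 i - u2 i)))
    by (apply rsum_ext; intros; unfold b; ring).
  set (q := rsum n (fun i => a i * a i)) in *.
  assert (Hq0 : 0 < q).
  { destruct (Rle_or_lt q 0) as [Z|Z]; [|exact Z]. exfalso.
    assert (Za := rsum_sq_zero n a Z).
    rewrite (rsum_ext _ _ (fun _ => 0)) in Sa by (intros i Hi; rewrite Za by exact Hi; ring).
    rewrite rsum_const in Sa. lra. }
  assert (Hq4 : q < 4) by lra.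
  set (c := sqrt q). assert (Hc : 0 < c) by (apply sqrt_lt_R0; lra).
  assert (Hcc : c * c = q) by (apply sqrt_sqrt; lra).
  assert (Hc2 : c < 2) by nra.
  set (w := fun i => / c * a i).
  assert (Hw : rsum n (fun i => w i * w i) = 1).
  { unfold w. rewrite (rsum_ext _ _ (fun i => (/ c * / c) * (a i * a i))) by (intros; ring).
    rewrite rsum_scal. fold q. rewrite <- Hcc. field. lra. }
  assert (Fw : Fp (updT (updT u j1 w) j2 w) = N).
  { unfold Fp. rewrite <- B_Aop. unfold w.
    rewrite (B_scal1 u j1 j2 hj1 hj2 hj12), (B_scal2 u j1 j2 hj1 hj2 hj12), !vnorm_scal, Ea.
    rewrite Rabs_right by (left; apply Rinv_0_lt_compat; lra). fold q. rewrite <- Hcc. field. lra. }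
  pose proof (HP _ (unitT_upd2 u j1 j2 w w Hu Hw Hw) Fw) as H.
  rewrite Phi_upd2 in H. unfold Phi in H. fold S in H.
  set (kp := 2 / c - 1).
  rewrite (rsum_ext n _ (fun i => (S i + kp * a i) * (S i + kp * a i))) in H.
  2:{ intros i Hi. unfold w, kp, a. fold u1 u2. field. lra. }
  rewrite rsum_quad in H. fold q in H.
  change (rsum n (fun i => rsum m (fun j => u j i) * rsum m (fun j => u j i))) with (rsum n (fun i => S i * S i)) in H.
  assert (Hkp : 0 < kp).
  { unfold kp. apply Rlt_0_minus. apply (Rmult_lt_reg_r c); [lra|]. unfold Rdiv. rewrite Rmult_assoc, Rinv_l by lra. lra. }
  assert (0 < 2 * kp * rsum n (fun i => S i * a i)) by nra.
  assert (0 <= kp * kp * q) by nra.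
  lra.
Qed.

End PairEq.

Lemma unit_cube u : unitT u -> cube (m * n) (flat u).
Proof.
  intros Hu k Hk. unfold flat.
  assert (Hj : (k / n < m)%nat) by (apply Nat.Div0.div_lt_upper_bound; lia).
  assert (Hi : (k mod n < n)%nat) by (apply Nat.mod_upper_bound; lia).
  assert (H := rsum_term_le n (fun i => u (k / n)%nat i * u (k / n)%nat i) (k mod n)
    ltac:(intros; apply Rle_0_sqr) Hi). simpl in H. rewrite (Hu _ Hj) in H.
  apply Rabs_le. nra.
Qed.

Lemma Gq_unit u : unitT u -> Gq u = 0.
Proof.
  intro Hu. unfold Gq. rewrite (rsum_ext _ _ (fun _ => 0)), rsum_const; [ring|].
  intros j Hj. rewrite (Hu j Hj). replace (1 + -1) with 0 by ring. apply Rabs_R0.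
Qed.

Lemma Gq_nonneg u : 0 <= Gq u.
Proof. apply rsum_nonneg. intros; apply Rabs_pos. Qed.

Lemma unit_Gq u : Gq u = 0 -> unitT u.
Proof.
  intros H j Hj. pose proof (rsum_nonneg_zero m _ (fun j _ => Rabs_pos _) H j Hj) as E. simpl in E.
  destruct (Req_dec (rsum n (fun i => u j i * u j i) + -1) 0) as [Z|Z]; [lra|].
  apply Rabs_no_R0 in Z. contradiction.
Qed.

Theorem kellogg : forall u, unitT u -> Fp u <= M.
Proof.
  set (u0 := fun (j i : nat) => if Nat.eqb i 0 then 1 else 0).
  assert (U0 : unitT u0).
  { intros j Hj. unfold u0. rewrite (rsum_ext _ _ (fun i => if Nat.eqb i 0 then 1 else 0)).
    - apply rsum_single. lia.
    - intros i Hi. destruct (Nat.eqb i 0); ring. }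
  destruct (EVT_gen (m * n) (fun v => Fp (unflat v)) (fun v => Gq (unflat v)) Fp_cont Gq_cont
    (dep_on_unflat _ Fp_dep) (dep_on_unflat _ Gq_dep)) as [v1 [C1 [G1 H1]]].
  { exists (flat u0). split; [apply unit_cube; exact U0|]. rewrite depT_flat by apply Gq_dep. apply Gq_unit; exact U0. }
  set (N := Fp (unflat v1)).
  assert (maxN : forall u, unitT u -> Fp u <= N).
  { intros u Hu. rewrite <- (depT_flat Fp u Fp_dep). apply H1; [apply unit_cube; exact Hu|].
    rewrite depT_flat by apply Gq_dep. apply Gq_unit; exact Hu. }
  set (G2 := fun u => Gq u + Rabs (Fp u + - N)).
  assert (G2dep : depT G2).
  { intros u u' E. unfold G2. rewrite (Gq_dep u u' E), (Fp_dep u u' E). reflexivity. }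
  assert (G2cont : cont_on (m * n) (fun v => G2 (unflat v))).
  { unfold G2. apply cont_plus; [apply Gq_cont|]. apply cont_abs. apply cont_plus; [apply Fp_cont| apply cont_const]. }
  destruct (EVT_gen (m * n) (fun v => Phi (unflat v)) (fun v => G2 (unflat v)) Phi_cont G2cont
    (dep_on_unflat _ Phi_dep) (dep_on_unflat _ G2dep)) as [v2 [C2 [G2z H2]]].
  { exists v1. split; [exact C1|]. unfold G2. fold N. rewrite G1. replace (N + - N) with 0 by ring. rewrite Rabs_R0. ring. }
  set (us := unflat v2).
  assert (Gus : Gq us = 0 /\ Fp us = N).
  { unfold G2 in G2z. fold us in G2z. pose proof (Gq_nonneg us). pose proof (Rabs_pos (Fp us + - N)).
    split; [lra|]. assert (ZZ : Rabs (Fp us + - N) = 0) by lra.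
    destruct (Req_dec (Fp us + - N) 0) as [Z|Z]; [lra|]. apply Rabs_no_R0 in Z. contradiction. }
  destruct Gus as [Gus Fus]. assert (Uus : unitT us) by (apply unit_Gq; exact Gus).
  assert (maxP : forall w, unitT w -> Fp w = N -> Phi w <= Phi us).
  { intros w Hw Fw. rewrite <- (depT_flat Phi w Phi_dep). apply H2; [apply unit_cube; exact Hw|].
    unfold G2. rewrite depT_flat by apply Gq_dep. rewrite depT_flat by apply Fp_dep.
    rewrite Gq_unit by exact Hw. rewrite Fw. replace (N + - N) with 0 by ring. rewrite Rabs_R0. ring. }
  assert (Eq : forall j i, (j < m)%nat -> (i < n)%nat -> us j i = us 0%nat i).
  { intros j i Hj Hi. destruct (Nat.eq_dec j 0) as [->|Hj0]; [reflexivity|].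
    apply (pair_eq us N Uus Fus maxN maxP j 0%nat); auto; lia. }
  assert (FM : Fp us <= M).
  { unfold Fp, Aop. replace (L (fun j => comb ys n (us j))) with (hat L (comb ys n (us 0%nat))).
    - apply HM. apply Uus. lia.
    - unfold hat. apply hdep. intros j Hj. apply comb_ext. intros i Hi. symmetry. apply Eq; auto. }
  intros u Hu. specialize (maxN u Hu). lra.
Qed.

End Kellogg.

Fixpoint blk (ks : list nat) (j : nat) : nat :=
  match ks with nil => 0%nat | k :: ks' => if Nat.ltb j k then 0%nat else S (blk ks' (j - k)) end.

Lemma blk_spec (X : NormedSpace) (ks : list nat) (xs : list X) j :
  length xs = length ks -> (j < list_sum ks)%nat ->
  (blk ks j < length ks)%nat /\ block_tuple xs ks j = nth (blk ks j) xs vzero.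
Proof.
  revert xs j. induction ks as [|k ks IH]; intros xs j Hl Hj; simpl in *; [lia|].
  destruct xs as [|x xs]; simpl in Hl; [lia|].
  unfold block_tuple. simpl.
  destruct (Nat.ltb_spec j k).
  - split; [lia|]. rewrite app_nth1 by (rewrite repeat_length; lia). simpl. apply nth_repeat_lt. lia.
  - rewrite app_nth2 by (rewrite repeat_length; lia). rewrite repeat_length.
    destruct (IH xs (j - k)%nat ltac:(lia) ltac:(lia)) as [H1 H2]. split; [lia|]. simpl.
    unfold block_tuple in H2. exact H2.
Qed.

Lemma rprod_ext k f g : (forall j, (j < k)%nat -> f j = g j) -> rprod k f = rprod k g.
Proof. induction k; intro H; [reflexivity|]. unfold rprod; fold rprod. rewrite IHk by (intros; apply H; lia). rewrite H by lia. reflexivity. Qed.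

Lemma rprod_nonneg k f : (forall j, (j < k)%nat -> 0 <= f j) -> 0 <= rprod k f.
Proof.
  induction k; intro H; unfold rprod; fold rprod; [lra|].
  apply Rmult_le_pos; [apply IHk; intros; apply H; lia| apply H; lia].
Qed.

Lemma rprod_split a b f : rprod (a + b) f = rprod a f * rprod b (fun j => f (a + j)%nat).
Proof.
  induction b.
  - rewrite Nat.add_0_r. unfold rprod at 3. ring.
  - rewrite Nat.add_succ_r. unfold rprod; fold rprod. rewrite IHb. ring.
Qed.

Lemma pow_lt_strict x y k : 0 <= x -> x < y -> (1 <= k)%nat -> x ^ k < y ^ k.
Proof.
  intros Hx Hxy Hk. induction k; [lia|]. destruct k.
  - simpl. lra.
  - specialize (IHk ltac:(lia)). simpl in *. assert (0 <= x * x ^ k) by (apply Rmult_le_pos; [lra| apply pow_le; lra]).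
    nra.
Qed.

Lemma exp_mult_nat k t : exp (INR k * t) = exp t ^ k.
Proof.
  induction k.
  - simpl INR. rewrite Rmult_0_l, exp_0. reflexivity.
  - rewrite S_INR. cbn [pow]. rewrite <- IHk, <- exp_plus. f_equal. ring.
Qed.

Lemma real_key k0 k1 : (1 <= k0)%nat -> (1 <= k1)%nat -> k0 <> k1 ->
  INR (k0 + k1) ^ (k0 + k1) < (2 * INR k0) ^ k0 * (2 * INR k1) ^ k1.
Proof.
  intros H0 H1 H01.
  set (m := INR (k0 + k1)). assert (Hm : m = INR k0 + INR k1) by (unfold m; apply plus_INR).
  assert (P0 : 1 <= INR k0) by (apply (le_INR 1); lia).
  assert (P1 : 1 <= INR k1) by (apply (le_INR 1); lia).
  assert (N0 : 2 * INR k0 <> m).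
  { rewrite Hm. intro E. apply H01. apply INR_eq. lra. }
  set (y0 := m / (2 * INR k0)). set (y1 := m / (2 * INR k1)).
  assert (Y0 : y0 < exp (y0 - 1)).
  { pose proof (exp_ineq1 (y0 - 1)) as E. assert (y0 - 1 <> 0).
    { unfold y0. intro Z. apply N0. assert (E2 : m / (2 * INR k0) = 1) by lra. unfold Rdiv in E2.
      apply (Rmult_eq_compat_r (2 * INR k0)) in E2. rewrite Rmult_assoc, Rinv_l in E2 by lra. lra. }
    specialize (E H). lra. }
  assert (Y1 : y1 <= exp (y1 - 1)) by (pose proof (exp_ineq1_le (y1 - 1)); lra).
  assert (Y0p : 0 < y0) by (unfold y0; apply Rdiv_lt_0_compat; lra).
  assert (Y1p : 0 < y1) by (unfold y1; apply Rdiv_lt_0_compat; lra).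
  assert (A : y0 ^ k0 * y1 ^ k1 < 1).
  { apply Rlt_le_trans with (exp (y0 - 1) ^ k0 * exp (y1 - 1) ^ k1).
    - apply Rlt_le_trans with (exp (y0 - 1) ^ k0 * y1 ^ k1).
      + apply Rmult_lt_compat_r; [apply pow_lt; lra| apply pow_lt_strict; [lra|lra|lia]].
      + apply Rmult_le_compat_l; [apply pow_le; left; apply exp_pos| apply pow_incr; lra].
    - rewrite <- !exp_mult_nat, <- exp_plus. unfold y0, y1.
      replace (INR k0 * (m / (2 * INR k0) - 1) + INR k1 * (m / (2 * INR k1) - 1)) with 0.
      + rewrite exp_0. ring_simplify. lra.
      + rewrite Hm. field. lra. }
  assert (Em : m ^ (k0 + k1) = (y0 ^ k0 * y1 ^ k1) * ((2 * INR k0) ^ k0 * (2 * INR k1) ^ k1)).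
  { rewrite pow_add. replace m with (y0 * (2 * INR k0)) at 1 by (unfold y0; field; lra).
    replace m with (y1 * (2 * INR k1)) by (unfold y1; field; lra).
    rewrite !Rpow_mult_distr. ring. }
  rewrite Em. assert (0 < (2 * INR k0) ^ k0 * (2 * INR k1) ^ k1) by (apply Rmult_lt_0_compat; apply pow_lt; lra).
  nra.
Qed.

Lemma key_ineq m k0 k1 : (k0 + k1 = m)%nat -> Nat.odd m = true -> (1 <= m)%nat ->
  (m ^ m + 1 <= 2 ^ m * k0 ^ k0 * k1 ^ k1)%nat.
Proof.
  intros Hs Ho Hm.
  assert (Hpos : (1 <= m ^ m)%nat) by (apply (Nat.pow_le_mono_l 1 m m) in Hm; simpl in Hm; rewrite Nat.pow_1_l in Hm; lia).
  destruct (Nat.eq_dec k0 0) as [Z0|Z0].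
  - subst. simpl in *.
    assert (2 <= 2 ^ k1)%nat by (apply (Nat.pow_le_mono_r 2 1 k1); lia). nia.
  - destruct (Nat.eq_dec k1 0) as [Z1|Z1].
    + subst. rewrite Nat.add_0_r in *. rewrite Nat.pow_0_r, Nat.mul_1_r.
      assert (2 <= 2 ^ k0)%nat by (apply (Nat.pow_le_mono_r 2 1 k0); lia). nia.
    + assert (k0 <> k1).
      { intro E. subst. apply Nat.odd_spec in Ho. destruct Ho as [q Hq]. lia. }
      pose proof (real_key k0 k1 ltac:(lia) ltac:(lia) H) as R.
      rewrite !Rpow_mult_distr in R.
      assert (E : (2 ^ k0 * INR k0 ^ k0 * (2 ^ k1 * INR k1 ^ k1)) = INR (2 ^ m * k0 ^ k0 * k1 ^ k1)).
      { rewrite !mult_INR, !pow_INR. subst m. rewrite pow_add. simpl (INR 2). replace (1 + 1) with 2 by ring. ring. }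
      rewrite E, <- pow_INR, Hs in R. apply INR_lt in R. lia.
Qed.

Lemma rpower_le x c m : (1 <= m)%nat -> 1 <= c -> x <= c ^ m -> Rpower x (/ INR m) <= c.
Proof.
  intros Hm Hc Hx. assert (HmR : 0 < INR m) by (apply lt_0_INR; lia).
  destruct (Rle_or_lt x 0) as [Z|Z].
  - unfold Rpower, ln. destruct (Rlt_dec 0 x) as [Hx0|Hx0]. { exfalso. lra. } rewrite Rmult_0_r, exp_0. exact Hc.
  - apply Rle_trans with (Rpower (c ^ m) (/ INR m)).
    + apply Rle_Rpower_l; [left; apply Rinv_0_lt_compat; lra| lra].
    + rewrite <- Rpower_pow by lra. rewrite Rpower_mult, Rinv_r, Rpower_1 by lra. lra.
Qed.

Lemma rpower_lt x c m : (1 <= m)%nat -> 1 < c -> x < c ^ m -> Rpower x (/ INR m) < c.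
Proof.
  intros Hm Hc Hx. assert (HmR : 0 < INR m) by (apply lt_0_INR; lia).
  destruct (Rle_or_lt x 0) as [Z|Z].
  - unfold Rpower, ln. destruct (Rlt_dec 0 x) as [Hx0|Hx0]. { exfalso. lra. } rewrite Rmult_0_r, exp_0. exact Hc.
  - apply Rlt_le_trans with (Rpower (c ^ m) (/ INR m)).
    + apply Rlt_Rpower_l; [apply Rinv_0_lt_compat; lra| lra].
    + rewrite <- Rpower_pow by lra. rewrite Rpower_mult, Rinv_r, Rpower_1 by lra. lra.
Qed.

Section Final.
Variables (X Y : NormedSpace) (m n : nat) (L : (nat -> X) -> Y).
Hypothesis hL : is_csm X Y m L.
Hypothesis hm : (1 <= m)%nat.
Hypothesis hn : (1 <= n)%nat.

Lemma K_nonneg K : is_lub (hat_norm_set L) K -> 0 <= K.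
Proof.
  intro HK. apply (proj1 HK). exists vzero. split; [rewrite vnorm_zero; lra|].
  rewrite (hat_zero X Y m L (proj1 hL) (proj1 (proj2 hL)) hm), vnorm_zero. reflexivity.
Qed.

Lemma block_bound K ks xs (alpha : nat -> R) :
  is_lub (hat_norm_set L) K -> length ks = n -> length xs = n -> list_sum ks = m ->
  Forall (fun x => vnorm x <= 1) xs -> (forall i, 0 <= alpha i) ->
  rprod m (fun j => alpha (blk ks j)) * vnorm (L (block_tuple xs ks)) <=
  K * sqrt (rsum n (fun i => alpha i * alpha i)) ^ m.
Proof.
  intros HK Hks Hxs Hsum Hf Ha.
  pose proof hL as [hdep [hml [hsym hcont]]].
  set (ys := fun i => vscal (alpha i) (nth i xs vzero)).
  set (sA := sqrt (rsum n (fun i => alpha i * alpha i))).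
  assert (HK0 : 0 <= K) by (apply K_nonneg; exact HK).
  assert (HsA : 0 <= sA) by apply sqrt_pos.
  assert (HM : forall t, rsum n (fun i => t i * t i) = 1 -> vnorm (hat L (comb ys n t)) <= K * sA ^ m).
  { intros t Ht. eapply Rle_trans; [apply (hat_bound X Y m L hdep hml K HK hm)|].
    apply Rmult_le_compat_l; [exact HK0|]. apply pow_incr. split; [apply vnorm_nonneg|].
    eapply Rle_trans; [apply comb_norm|].
    apply Rle_trans with (rsum n (fun i => alpha i * Rabs (t i))).
    - apply rsum_le. intros i Hi. unfold ys. rewrite vnorm_scal. rewrite (Rabs_right (alpha i)) by (apply Rle_ge; apply Ha).
      assert (Hx : vnorm (nth i xs vzero) <= 1) by (apply (proj1 (Forall_nth _ xs) Hf); lia).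
      pose proof (Rabs_pos (t i)). pose proof (Ha i). pose proof (vnorm_nonneg _ (nth i xs vzero)).
      assert (0 <= Rabs (t i) * alpha i) by nra. nra.
    - set (s := rsum n (fun i => alpha i * Rabs (t i))).
      assert (Hs0 : 0 <= s) by (apply rsum_nonneg; intros; pose proof (Ha i); pose proof (Rabs_pos (t i)); nra).
      assert (Hcs : s * s <= rsum n (fun i => alpha i * alpha i)).
      { apply CS_unit. rewrite <- Ht. apply rsum_ext. intros i _. rewrite <- Rabs_mult. apply Rabs_right. apply Rle_ge, Rle_0_sqr. }
      unfold sA. rewrite <- (sqrt_square s) by exact Hs0. apply sqrt_le_1_alt. exact Hcs. }
  set (u := fun j i => if Nat.eqb i (blk ks j) then 1 else 0).
  assert (Hu : unitT m n u).
  { intros j Hj. destruct (blk_spec X ks xs j ltac:(lia) ltac:(lia)) as [Hb _].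
    unfold u. rewrite (rsum_ext _ _ (fun i => if Nat.eqb i (blk ks j) then 1 else 0)).
    - apply rsum_single. lia.
    - intros i _. destruct (Nat.eqb i (blk ks j)); ring. }
  pose proof (kellogg X Y m n L ys (K * sA ^ m) hL hm hn HM u Hu) as Kel.
  unfold Fp, Aop in Kel.
  set (b := fun j => alpha (blk ks j)). set (f := fun j => nth (blk ks j) xs vzero).
  assert (E1 : L (fun j => comb ys n (u j)) = L (fun j => if Nat.ltb j m then vscal (b j) (f j) else f j)).
  { apply hdep. intros j Hj. destruct (blk_spec X ks xs j ltac:(lia) ltac:(lia)) as [Hb _].
    rewrite (proj2 (Nat.ltb_lt j m) Hj). unfold u. rewrite comb_basis by lia. reflexivity. }
  rewrite E1, (L_scal_all X Y m L hml b f m (le_n m)) in Kel.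
  assert (E2 : L f = L (block_tuple xs ks)).
  { apply hdep. intros j Hj. destruct (blk_spec X ks xs j ltac:(lia) ltac:(lia)) as [_ Hb]. rewrite Hb. reflexivity. }
  rewrite E2, vnorm_scal, Rabs_right in Kel.
  - exact Kel.
  - apply Rle_ge, rprod_nonneg. intros; apply Ha.
Qed.

End Final.

Lemma sqrt_pow_sq a k : 0 <= a -> sqrt a ^ k * sqrt a ^ k = a ^ k.
Proof. intro Ha. rewrite <- Rpow_mult_distr, sqrt_sqrt by exact Ha. reflexivity. Qed.

Theorem mainTheorem2 (X Y : NormedSpace) (m n : nat) (L : (nat -> X) -> Y)
  (hm : (1 <= m)%nat) (hn : (2 <= n)%nat)
  (hL : is_csm X Y m L)
  (hnz : exists x : X, hat L x <> vzero)
  (normhat normn : R)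
  (Hhat : is_lub (hat_norm_set L) normhat)
  (Hn : is_lub (n_norm_set m n L) normn) :
  Rpower (normn / normhat) (/ INR m) <= sqrt (INR n) /\
  (n = 2%nat -> Nat.odd m = true -> Rpower (normn / normhat) (/ INR m) < sqrt 2).
Proof.
  pose proof hL as [hdep [hml [hsym hcont]]].
  set (K := normhat) in *.
  assert (HK0 : 0 <= K) by (apply (K_nonneg X Y m L hL hm); exact Hhat).
  assert (HKp : 0 < K).
  { destruct hnz as [x0 Hx0].
    pose proof (hat_bound X Y m L hdep hml K Hhat hm x0) as Hb.
    assert (Hp : 0 < vnorm (hat L x0)).
    { pose proof (vnorm_nonneg _ (hat L x0)). destruct (Req_dec (vnorm (hat L x0)) 0) as [Z|Z]; [|lra].
      apply vnorm_eq0 in Z. contradiction. }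
    pose proof (pow_le (vnorm x0) m (vnorm_nonneg _ x0)).
    destruct (Req_dec K 0) as [Z|Z]; [|lra]. rewrite Z in Hb. lra. }
  split.
  -
    assert (Hsq1 : 1 <= sqrt (INR n)).
    { rewrite <- sqrt_1. apply sqrt_le_1_alt. apply (le_INR 1). lia. }
    assert (Hub : forall r, n_norm_set m n L r -> r <= K * sqrt (INR n) ^ m).
    { intros r [ks [xs [Hks [Hxs [Hsum [Hf ->]]]]]].
      pose proof (block_bound X Y m n L hL hm ltac:(lia) K ks xs (fun _ => 1) Hhat Hks Hxs Hsum Hf
        ltac:(intros; lra)) as Hb.
      cbv beta in Hb. rewrite rprod_const, pow1, Rmult_1_l, (rsum_ext _ _ (fun _ => 1)), rsum_const, Rmult_1_r in Hb
        by (intros; ring).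
      exact Hb. }
    assert (Hle : normn <= K * sqrt (INR n) ^ m) by (apply (proj2 Hn); exact Hub).
    apply rpower_le; [exact hm| exact Hsq1|].
    apply (Rmult_le_reg_l K); [exact HKp|]. unfold Rdiv. rewrite <- Rmult_assoc, (Rmult_comm K normn), Rmult_assoc, Rinv_r, Rmult_1_r by lra.
    exact Hle.
  - intros Hn2 Hodd. subst n.
    set (mm := INR m ^ m).
    assert (Hmm : 0 < mm) by (apply pow_lt, lt_0_INR; lia).
    set (c2 := sqrt (2 ^ m * mm / (mm + 1))).
    assert (Hc2 : 0 <= c2) by apply sqrt_pos.
    assert (Hc2sq : c2 * c2 = 2 ^ m * mm / (mm + 1)).
    { apply sqrt_sqrt. apply Rmult_le_pos; [apply Rmult_le_pos; [apply pow_le; lra|lra]|].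
      left; apply Rinv_0_lt_compat; lra. }
    assert (Hub : forall r, n_norm_set m 2 L r -> r <= K * c2).
    { intros r [ks [xs [Hks [Hxs [Hsum [Hf ->]]]]]].
      destruct ks as [|k0 [|k1 [|]]]; simpl in Hks; try lia.
      set (alpha := fun i => sqrt (INR (nth i [k0; k1] 0%nat))).
      pose proof (block_bound X Y m 2 L hL hm ltac:(lia) K [k0; k1] xs alpha Hhat Hks Hxs Hsum Hf
        ltac:(intros; apply sqrt_pos)) as Hb.
      simpl in Hsum. rewrite Nat.add_0_r in Hsum.
      assert (Ers : rsum 2 (fun i => alpha i * alpha i) = INR m).
      { simpl. unfold alpha. simpl. rewrite !sqrt_sqrt by apply pos_INR. rewrite <- Hsum, plus_INR. ring. }
      rewrite Ers in Hb.
      assert (Epr : rprod m (fun j => alpha (blk [k0; k1] j)) = sqrt (INR k0) ^ k0 * sqrt (INR k1) ^ k1).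
      { rewrite <- Hsum, rprod_split. f_equal.
        - rewrite (rprod_ext _ _ (fun _ => sqrt (INR k0))), rprod_const; [reflexivity|].
          intros j Hj. unfold alpha, blk. destruct (Nat.ltb_spec j k0); [reflexivity|lia].
        - rewrite (rprod_ext _ _ (fun _ => sqrt (INR k1))), rprod_const; [reflexivity|].
          intros j Hj. unfold alpha, blk. destruct (Nat.ltb_spec (k0 + j) k0); [lia|].
          destruct (Nat.ltb_spec (k0 + j - k0) k1); [reflexivity|lia]. }
      rewrite Epr in Hb.
      set (P := sqrt (INR k0) ^ k0 * sqrt (INR k1) ^ k1) in *.
      assert (HP0 : 0 <= P) by (apply Rmult_le_pos; apply pow_le, sqrt_pos).
      assert (HP2 : P * P = INR k0 ^ k0 * INR k1 ^ k1).
      { unfold P. rewrite <- (sqrt_pow_sq (INR k0) k0), <- (sqrt_pow_sq (INR k1) k1) by apply pos_INR. ring. }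
      assert (Hsm : sqrt (INR m) ^ m * sqrt (INR m) ^ m = mm) by (apply sqrt_pow_sq, pos_INR).
      pose proof (key_ineq m k0 k1 Hsum Hodd hm) as KI.
      apply le_INR in KI. rewrite plus_INR, !mult_INR, !pow_INR in KI. simpl (INR 2) in KI. simpl (INR 1) in KI.
      replace (1 + 1) with 2 in KI by ring. fold mm in KI.
      rewrite Rmult_assoc, <- HP2 in KI.
      set (r := vnorm (L (block_tuple xs [k0; k1]))) in *.
      assert (Hr0 : 0 <= r) by apply vnorm_nonneg.
      assert (Hs0 : 0 <= sqrt (INR m) ^ m) by (apply pow_le, sqrt_pos).
      assert (H1 : (P * r) * (P * r) <= (K * sqrt (INR m) ^ m) * (K * sqrt (INR m) ^ m)).
      { apply Rmult_le_compat; try lra; apply Rmult_le_pos; lra. }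
      assert (H2 : r * r * (mm + 1) <= K * K * 2 ^ m * mm).
      { apply Rle_trans with (r * r * (2 ^ m * (P * P))).
        - apply Rmult_le_compat_l; [nra|lra].
        - assert (0 <= 2 ^ m) by (apply pow_le; lra).
          replace (r * r * (2 ^ m * (P * P))) with (2 ^ m * ((P * r) * (P * r))) by ring.
          replace (K * K * 2 ^ m * mm) with (2 ^ m * ((K * sqrt (INR m) ^ m) * (K * sqrt (INR m) ^ m))) by (rewrite <- Hsm; ring).
          apply Rmult_le_compat_l; lra. }
      assert (H3 : r * r <= (K * c2) * (K * c2)).
      { replace ((K * c2) * (K * c2)) with (K * K * (c2 * c2)) by ring. rewrite Hc2sq.
        apply (Rmult_le_reg_r (mm + 1)); [lra|].
        replace (K * K * (2 ^ m * mm / (mm + 1)) * (mm + 1)) with (K * K * 2 ^ m * mm) by (field; lra). exact H2. }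
      assert (0 <= K * c2) by (apply Rmult_le_pos; lra). nra. }
    assert (Hle : normn <= K * c2) by (apply (proj2 Hn); exact Hub).
    assert (Hs2 : 0 <= sqrt 2 ^ m) by (apply pow_le, sqrt_pos).
    assert (Hlt : c2 < sqrt 2 ^ m).
    { assert (E : sqrt 2 ^ m * sqrt 2 ^ m = 2 ^ m) by (apply sqrt_pow_sq; lra).
      assert (Hp2 : 0 < 2 ^ m) by (apply pow_lt; lra).
      assert (c2 * c2 < sqrt 2 ^ m * sqrt 2 ^ m).
      { rewrite Hc2sq, E. apply (Rmult_lt_reg_r (mm + 1)); [lra|].
        replace (2 ^ m * mm / (mm + 1) * (mm + 1)) with (2 ^ m * mm) by (field; lra). nra. }
      nra. }
    apply rpower_lt; [exact hm| |].
    + rewrite <- sqrt_1. apply sqrt_lt_1_alt. lra.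
    + apply Rle_lt_trans with c2; [|exact Hlt].
      apply (Rmult_le_reg_l K); [exact HKp|]. unfold Rdiv. rewrite <- Rmult_assoc, (Rmult_comm K normn), Rmult_assoc, Rinv_r, Rmult_1_r by lra.
      exact Hle.
Qed.
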